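(* Let $(M,g)$ be a Riemannian manifold of dimension $n$ with Riemann curvature tensor $R$, and let $p$ be an integer with $1\leq p\leq n/2$. Then $(M,g)$ is $p$-pure if and only if at each point $m\in M$ there exists a family $\{h_i:i\in I\}$ of symmetric bilinear forms on $T_mM$ which are simultaneously diagonalizable (by an orthonormal basis of $T_mM$) such that $R^p$ at $m$ belongs to $\mathrm{Span}\{h_{i_1}h_{i_2}\cdots h_{i_p}: i_1,\dots,i_p\in I\}$.
   Context: For a Euclidean vector space $(V,g)$, a double form of degree $(p,q)$ is an element of $\Lambda^pV^*\otimes\Lambda^qV^*$, identified with a multilinear form skew-symmetric in its first $p$ and in its last $q$ arguments; bilinear forms on $V$ are $(1,1)$ double forms. The exterior product of double forms is defined on decomposable elements by $(\theta_1\otimes\theta_2)(\theta_3\otimes\theta_4)=(\theta_1\wedge\theta_3)\otimes(\theta_2\wedge\theta_4)$ and extended bilinearly; $h_{i_1}\cdots h_{i_p}$ and $R^p$ denote products for this operation. The curvature tensor $R$ at $m$ is regarded as a $(2,2)$ double form on $T_mM$. $(M,g)$ is $p$-pure if at each point $m$ there is an orthonormal basis $(e_i)$ of $T_mM$, with dual basis $(e_i^* )$, such that $R^p\in\mathrm{Span}\{e_{i_1}^*\wedge\cdots\wedge e_{i_p}^*\otimes e_{i_1}^*\wedge\cdots\wedge e_{i_p}^*:1\leq i_1<\dots<i_p\leq n\}$. *)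

(* Defs.v *)
(* Double forms on the Euclidean space R^n (standard inner
   product), represented by their components on the standard basis. *)
From HB Require Import structures.
From mathcomp Require Import all_boot all_order all_algebra fingroup perm.
From mathcomp Require Import reals.
Unset Printing Implicit Defensive.
Import Order.TTheory GRing.Theory Num.Theory.
Local Open Scope ring_scope.

Section DoubleForms.
Variable R : realType.
Variable n : nat.

(* A (p,q) double form on R^n, given by its values D(e_{a 1},...,e_{a p};
   e_{b 1},...,e_{b q}) on standard basis vectors (multilinearity). *)
Definition dform (p q : nat) := ('I_p -> 'I_n) -> ('I_q -> 'I_n) -> R.

Definition is_dform {p q} (D : dform p q) : Prop :=
  (forall (s : 'S_p) a b, D (a \o s) b = (-1) ^+ s * D a b) /\
  (forall (s : 'S_q) a b, D a (b \o s) = (-1) ^+ s * D a b).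

(* exterior product of double forms (determinant / Alt convention):
   (w1 w2)(x;y) = 1/(p!r!q!s!) sum_{sigma,tau} sgn sigma sgn tau
                  w1(x_sigma(1..p); y_tau(1..q)) w2(x_sigma(p+1..); y_tau(q+1..)) *)
Definition dmul p q r s (w1 : dform p q) (w2 : dform r s) : dform (p + r) (q + s) :=
  fun a b =>
    ((p`! * r`! * q`! * s`!)%N%:R)^-1 *
    \sum_(sg : 'S_(p + r)) \sum_(tu : 'S_(q + s))
      ((-1) ^+ sg * (-1) ^+ tu *
       w1 (fun i => a (sg (lshift r i))) (fun j => b (tu (lshift s j))) *
       w2 (fun i => a (sg (rshift p i))) (fun j => b (tu (rshift q j)))).

Definition dunit : dform 0 0 := fun _ _ => 1.

Arguments dmul {p q r s}.

Fixpoint dpow (Rc : dform 2 2) (k : nat) : dform k.*2 k.*2 :=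
  match k return dform k.*2 k.*2 with
  | 0 => dunit
  | k'.+1 => dmul Rc (dpow Rc k')
  end.

Fixpoint dprod (k : nat) : ('I_k -> dform 1 1) -> dform k k :=
  match k return ('I_k -> dform 1 1) -> dform k k with
  | 0 => fun _ => dunit
  | k'.+1 => fun h => dmul (h ord0) (dprod k' (fun i => h (lift ord0 i)))
  end.

Definition bil (B : 'M[R]_n) : dform 1 1 := fun a b => B (a ord0) (b ord0).

Definition in_span {p q} (S : dform p q -> Prop) (D : dform p q) : Prop :=
  exists (k : nat) (c : 'I_k -> R) (v : 'I_k -> dform p q),
    (forall j, S (v j)) /\ (forall a b, D a b = \sum_(j < k) c j * v j a b).

(* an orthonormal basis (e_i) of R^n: rows of Q, with Q Q^T = 1 *)
Definition orthonormal_basis (Q : 'M[R]_n) : Prop := Q *m Q^T = 1%:M.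

(* e*_{i_1} /\ ... /\ e*_{i_p} (determinant convention), e*_i = <e_i, .> *)
Definition wedge_dual (Q : 'M[R]_n) {p} (i : 'I_p -> 'I_n) (a : 'I_p -> 'I_n) : R :=
  \det (\matrix_(k < p, l < p) Q (i k) (a l)).

Definition pure_basis_form (Q : 'M[R]_n) {p} (i : 'I_p -> 'I_n) : dform p p :=
  fun a b => wedge_dual Q i a * wedge_dual Q i b.

Definition strictly_increasing {p} (i : 'I_p -> 'I_n) : Prop :=
  forall k l : 'I_p, (k < l)%N -> (i k < i l)%N.

Definition pure_at (p : nat) (Rc : dform 2 2) : Prop :=
  exists (Q : 'M[R]_n), orthonormal_basis Q /\
    in_span (fun D => exists i : 'I_p.*2 -> 'I_n,
                        strictly_increasing i /\ D = pure_basis_form Q i)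
            (dpow Rc p).


Definition simult_orth_diag {I : Type} (h : I -> 'M[R]_n) : Prop :=
  exists (Q : 'M[R]_n), orthonormal_basis Q /\
    forall i, is_diag_mx (Q *m h i *m Q^T).

Definition pair2 (x y : 'I_n) : 'I_2 -> 'I_n := fun k => if k == ord0 then x else y.

Definition curvature_like (Rc : dform 2 2) : Prop :=
  is_dform Rc /\
  (forall a b, Rc a b = Rc b a) /\
  (forall x y z w, Rc (pair2 x y) (pair2 z w) + Rc (pair2 y z) (pair2 x w)
                   + Rc (pair2 z x) (pair2 y w) = 0).

End DoubleForms.

Arguments dmul {R n p q r s}.
Arguments dunit {R n}.
Arguments dpow {R n}.
Arguments dprod {R n}.
Arguments bil {R n}.
Arguments in_span {R n p q}.
Arguments orthonormal_basis {R n}.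
Arguments pure_at {R n}.
Arguments simult_orth_diag {R n I}.
Arguments curvature_like {R n}.
Arguments is_dform {R n p q}.

(* Main.v *)
Require Import Defs.
From mathcomp Require Import all_boot all_order all_algebra fingroup perm.
From mathcomp Require Import reals ring.
From Stdlib Require Import FunctionalExtensionality.
Import GRing.Theory Num.Theory.
Local Open Scope ring_scope.

Lemma key_step (R : realType) (n k : nat) (H : 'I_k.+1 -> 'M[R]_n) a b (s t : 'S_k) :
  \sum_(sg : 'S_k.+1) \sum_(tu : 'S_k.+1) ((-1)^+sg * (-1)^+tu *
     H ord0 (a (sg ord0)) (b (tu ord0)) * ((-1)^+s * (-1)^+t *
     \prod_(j < k) H (lift ord0 j) (a (sg (lift ord0 (s j)))) (b (tu (lift ord0 (t j)))))) =
  \sum_(s : 'S_k.+1) \sum_(t : 'S_k.+1)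
     ((-1) ^+ s * (-1) ^+ t * \prod_(j < k.+1) H j (a (s j)) (b (t j))).
Proof.
symmetry.
rewrite (reindex_inj (mulgI (lift_perm ord0 ord0 s))).
apply: eq_bigr => sg _.
rewrite (reindex_inj (mulgI (lift_perm ord0 ord0 t))).
apply: eq_bigr => tu _.
rewrite big_ord_recl !permM !lift_perm_id.
under eq_bigr => j _ do rewrite !permM !lift_perm_lift.
have sM : forall (u v : 'S_k.+1), (-1)^+ (u*v)%g = (-1)^+u * (-1)^+v :> R.
  by move=> u v; rewrite odd_permM signr_addb.
have sL : forall u : 'S_k, (-1)^+ (lift_perm ord0 ord0 u) = (-1)^+ u :> R.
  by move=> u; rewrite odd_lift_perm.
rewrite !sM !sL.
move: ((-1)^+ sg : R) ((-1)^+ tu : R) ((-1)^+ s : R) ((-1)^+ t : R) => x1 x2 x3 x4.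
move: (H ord0 _ _) (\prod_(j < k) _) => y1 y2.
ring.
Qed.

Lemma sum4_swap (R : realType) (A B C D : finType) (F : A -> B -> C -> D -> R) :
  \sum_a \sum_b \sum_c \sum_d F a b c d = \sum_c \sum_d \sum_a \sum_b F a b c d.
Proof.
transitivity (\sum_a \sum_c \sum_b \sum_d F a b c d).
  by apply: eq_bigr => a _; rewrite exchange_big.
transitivity (\sum_a \sum_c \sum_d \sum_b F a b c d).
  by apply: eq_bigr => a _; apply: eq_bigr => c _; rewrite exchange_big.
rewrite exchange_big; apply: eq_bigr => c _.
by rewrite exchange_big.
Qed.

Lemma dprod_bil (R : realType) (n k : nat) (H : 'I_k -> 'M[R]_n) a b :
  dprod k (fun j => bil (H j)) a b =
  \sum_(s : 'S_k) \sum_(t : 'S_k)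
     ((-1) ^+ s * (-1) ^+ t * \prod_(j < k) H j (a (s j)) (b (t j))).
Proof.
elim: k H a b => [|k IH] H a b.
  rewrite /= /dunit.
  have E : forall s : 'S_0, s = 1%g by move=> s; apply/permP => -[].
  rewrite (eq_bigr (fun _ => 1)); last first.
    move=> s _; rewrite (eq_bigr (fun _ => 1)); last first.
      by move=> t _; rewrite (E s) (E t) odd_perm1 big_ord0 !mulr1.
    by rewrite sumr_const card_Sn.
  by rewrite sumr_const card_Sn.
rewrite /= /dmul.
have r1 : forall i : 'I_k, rshift 1 i = lift ord0 i by move=> i; apply: val_inj.
have l0 : forall i : 'I_1, lshift k i = ord0 by move=> i; apply: val_inj => /=; case: i => -[].
under eq_bigr => sg _.
  under eq_bigr => tu _.
    rewrite IH /bil !l0 mulr_sumr.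
    under eq_bigr => s _.
      rewrite mulr_sumr.
      under eq_bigr => t _ do under eq_bigr => j _ do rewrite !r1.
      over.
    over.
  over.
rewrite /= (@sum4_swap R _ _ _ _ (fun (sg tu : 'S_k.+1) (s t : 'S_k) => (-1) ^+ sg * (-1) ^+ tu *
     H ord0 (a (sg ord0)) (b (tu ord0)) * ((-1)^+s * (-1)^+t *
     \prod_(j < k) H (lift ord0 j) (a (sg (lift ord0 (s j)))) (b (tu (lift ord0 (t j))))))).
under eq_bigr => s _ do under eq_bigr => t _ do rewrite key_step.
rewrite sumr_const sumr_const card_Sn.
move: (\sum_s _) => G.
have f1 : (1`! = 1)%N by [].
rewrite -mulrnA -(mulr_natr G) mulrCA f1 !muln1 mul1n mulVf ?mulr1 //.
by rewrite pnatr_eq0 -lt0n muln_gt0 fact_gt0.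
Qed.

Lemma sum_det (R : realType) (n k : nat) (Q : 'M[R]_n) (g : 'I_k -> 'I_n) a :
  \sum_(s : 'S_k) (-1)^+s * \prod_(j < k) Q (g j) (a (s j)) = wedge_dual R n Q g a.
Proof.
rewrite /wedge_dual /determinant; apply: eq_bigr => s _; congr (_ * _).
by apply: eq_bigr => j _; rewrite mxE.
Qed.

Lemma dprod_pure (R : realType) (n k : nat) (Q : 'M[R]_n) (g : 'I_k -> 'I_n)
   (H : 'I_k -> 'M[R]_n) a b :
  (forall j x y, H j x y = Q (g j) x * Q (g j) y) ->
  dprod k (fun j => bil (H j)) a b = pure_basis_form R n Q g a b.
Proof.
move=> HE.
rewrite dprod_bil /pure_basis_form -!sum_det mulr_suml; apply: eq_bigr => s _.
rewrite mulr_sumr; apply: eq_bigr => t _.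
under eq_bigr => j _ do rewrite HE.
rewrite big_split /=.
by rewrite mulrACA.
Qed.

Lemma dprod_diag (R : realType) (n k : nat) (Q : 'M[R]_n) (H : 'I_k -> 'M[R]_n)
   (dd : 'I_k -> 'rV[R]_n) a b :
  (forall j, H j = Q^T *m diag_mx (dd j) *m Q) ->
  dprod k (fun j => bil (H j)) a b =
  \sum_(g : {ffun 'I_k -> 'I_n}) (\prod_(j < k) dd j 0 (g j)) * pure_basis_form R n Q g a b.
Proof.
move=> HE; rewrite dprod_bil.
have Hx : forall j x y, H j x y = \sum_l (dd j 0 l * (Q l x * Q l y)).
  move=> j x y; rewrite HE !mxE; apply: eq_bigr => l _.
  rewrite mul_mx_diag !mxE; ring.
under eq_bigr => s _ do under eq_bigr => t _ do
  rewrite (eq_bigr _ (fun j _ => Hx j _ _)) bigA_distr_bigA mulr_sumr.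
rewrite (eq_bigr _ (fun s _ => exchange_big _ _ _ _ _ _)) exchange_big /=.
apply: eq_bigr => g _.
rewrite /pure_basis_form -!sum_det mulr_suml mulr_sumr; apply: eq_bigr => s _.
rewrite mulr_sumr mulr_sumr; apply: eq_bigr => t _.
rewrite big_split big_split /=.
by rewrite [in RHS]mulrACA (mulrCA _ (\prod_(i < k) dd i 0 (g i))).
Qed.

Lemma span_gen {R : realType} {n p q : nat} (S : dform R n p q -> Prop) D : S D -> in_span S D.
Proof.
move=> SD; exists 1%N, (fun _ => 1), (fun _ => D); split => // a b.
by rewrite big_ord1 mul1r.
Qed.

Lemma span0 {R : realType} {n p q : nat} (S : dform R n p q -> Prop) : in_span S (fun _ _ => 0).
Proof. exists 0%N, (fun _ => 0), (fun _ _ _ => 0); split; first by case.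
by move=> a b; rewrite big_ord0. Qed.

Lemma span_ext {R : realType} {n p q : nat} (S : dform R n p q -> Prop) D D' :
  in_span S D -> (forall a b, D' a b = D a b) -> in_span S D'.
Proof.
move=> [k [c [v [Sv E]]]] E'; exists k, c, v; split => // a b.
by rewrite E' E.
Qed.

Lemma span_lin {R : realType} {n p q : nat} (S : dform R n p q -> Prop) D1 D2 x :
  in_span S D1 -> in_span S D2 -> in_span S (fun a b => x * D1 a b + D2 a b).
Proof.
move=> [k1 [c1 [v1 [Sv1 E1]]]] [k2 [c2 [v2 [Sv2 E2]]]].
exists (k1 + k2)%N,
  (fun i => match split i with inl j => x * c1 j | inr j => c2 j end),
  (fun i => match split i with inl j => v1 j | inr j => v2 j end).
split.
  by move=> i; case: (split i).
move=> a b; rewrite big_split_ord E1 E2 mulr_sumr; congr (_ + _).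
  apply: eq_bigr => j _.
  by rewrite -[lshift _ j]/(unsplit (inl j)) unsplitK mulrA.
apply: eq_bigr => j _.
by rewrite -[rshift _ j]/(unsplit (inr j)) unsplitK.
Qed.

Lemma span_sum {R : realType} {n p q : nat} (S : dform R n p q -> Prop) (I : finType)
   (c : I -> R) (F : I -> dform R n p q) :
  (forall i, in_span S (F i)) -> in_span S (fun a b => \sum_i c i * F i a b).
Proof.
move=> HF.
elim: (index_enum I) => [|i r IH].
  by refine (span_ext _ _ _ (span0 S) _) => a b; rewrite big_nil.
refine (span_ext _ _ _ (span_lin S _ _ (c i) (HF i) IH) _) => a b.
by rewrite big_cons.
Qed.
Lemma sort_inj n k (g : 'I_k -> 'I_n) : injective g ->
  exists (g' : 'I_k -> 'I_n) (pi : 'S_k),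
    (forall k1 l : 'I_k, (k1 < l)%N -> (g' k1 < g' l)%N) /\ forall j, g j = g' (pi j).
Proof.
move=> ig.
set S := [set g j | j in [set: 'I_k]].
have cS : #|S| = k by rewrite card_imset // cardsT card_ord.
pose g' := fun j : 'I_k => enum_val (cast_ord (esym cS) j).
have Hin : forall j, g j \in S by move=> j; apply: imset_f; rewrite in_setT.
pose pi0 := fun j => cast_ord cS (enum_rank_in (Hin j) (g j)).
have gpi : forall j, g j = g' (pi0 j).
  by move=> j; rewrite /g' /pi0 cast_ordK enum_rankK_in // Hin.
have ipi : injective pi0.
  by move=> j1 j2 E; apply: ig; rewrite gpi E -gpi.
exists g', (perm ipi); split; last by move=> j; rewrite permE.
move=> k1 l lt.
have srt : sorted (fun x y : 'I_n => (x < y)%N) (enum S).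
  have -> : enum S = [seq x <- enum 'I_n | x \in S] by rewrite enumT.
  apply: sorted_filter; first by move=> x y z; apply: ltn_trans.
  rewrite -(sorted_map (e' := ltn) (f := val)) val_enum_ord.
  exact: iota_ltn_sorted.
have x0 : 'I_n by case: (g k1) => m Hm; exact: (Ordinal Hm).
rewrite /g' !(enum_val_nth x0).
have H1 : forall j : 'I_k, (cast_ord (esym cS) j : nat) \in [pred m | (m < size (enum S))%N].
  by move=> j; rewrite inE /= -cardE cS ltn_ord.
exact: (sorted_ltn_nth (leT := fun x y : 'I_n => (x < y)%N)
         (fun y x z => @ltn_trans y x z) x0 srt _ _ (H1 k1) (H1 l) lt).
Qed.

Lemma wedge_perm (R : realType) n k (Q : 'M[R]_n) (g g' : 'I_k -> 'I_n) (pi : 'S_k) a :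
  (forall j, g j = g' (pi j)) -> wedge_dual R n Q g a = (-1) ^+ pi * wedge_dual R n Q g' a.
Proof.
move=> E; rewrite /wedge_dual.
have -> : (\matrix_(k0 < k, l < k) Q (g k0) (a l)) =
          row_perm pi (\matrix_(k0 < k, l < k) Q (g' k0) (a l)).
  by apply/matrixP => i j; rewrite !mxE E.
by rewrite row_permE det_mulmx det_perm.
Qed.

Lemma pure_in_span (R : realType) n k (Q : 'M[R]_n) (g : 'I_k -> 'I_n) :
  in_span (fun D => exists i, strictly_increasing n i /\ D = pure_basis_form R n Q i)
          (pure_basis_form R n Q g).
Proof.
case E: [exists j1, exists j2, (j1 != j2) && (g j1 == g j2)].
  move/existsP: E => [j1 /existsP [j2 /andP [ne /eqP eq]]].
  refine (span_ext _ _ _ (span0 _) _) => a b.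
  rewrite /pure_basis_form /wedge_dual (determinant_alternate ne) ?mul0r //.
  by move=> l; rewrite !mxE eq.
have ig : injective g.
  move=> j1 j2 eq; apply/eqP; apply: contraFT E => ne.
  by apply/existsP; exists j1; apply/existsP; exists j2; rewrite ne eq eqxx.
have [g' [pi [si gE]]] := sort_inj _ _ _ ig.
refine (span_ext _ _ _ (span_gen _ (pure_basis_form R n Q g') _) _).
  by exists g'; split.
move=> a b; rewrite /pure_basis_form !(wedge_perm _ _ _ _ _ _ _ _ gE).
by rewrite mulrACA -signr_addb addbb expr0 mul1r.
Qed.


Theorem mainTheorem2 (R : realType) (n p : nat) (M : Type)
    (Rc : M -> dform R n 2 2) :
  (forall m, curvature_like (Rc m)) ->
  (1 <= p)%N -> (p.*2 <= n)%N ->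
  ((forall m, pure_at p (Rc m)) <->
   (forall m, exists (I : Type) (h : I -> 'M[R]_n),
      (forall i, (h i)^T = h i) /\ simult_orth_diag h /\
      in_span (fun D => exists f : 'I_p.*2 -> I,
                          D = dprod (p.*2) (fun j => bil (h (f j))))
              (dpow (Rc m) p))).
Proof.
move=> _ _ _; split.
  move=> Hp m; have [Q [oQ [k [c [v [Sv E]]]]]] := Hp m.
  pose h := fun l : 'I_n => (row l Q)^T *m row l Q.
  have hE : forall l x y, h l x y = Q l x * Q l y.
    by move=> l x y; rewrite !mxE big_ord1 !mxE.
  exists 'I_n, h; split.
    by move=> l; rewrite /h trmx_mul trmxK.
  split.
    exists Q; split => // l; apply/is_diag_mxP => i j ne.
    have -> : Q *m h l *m Q^T = (row l Q *m Q^T)^T *m (row l Q *m Q^T).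
      by rewrite /h trmx_mul trmxK !mulmxA.
    rewrite -row_mul oQ !mxE big_ord1 !mxE.
    case: (eqVneq l i) => [eli|nli]; last by rewrite mul0r.
    have nlj : l != j by rewrite eli; apply/eqP => eij; rewrite eij eqxx in ne.
    by rewrite (negbTE nlj) mulr0.
  exists k, c, v; split => // j.
  have [i [_ vE]] := Sv j.
  exists i; rewrite vE.
  apply: functional_extensionality => a; apply: functional_extensionality => b.
  by rewrite (dprod_pure _ _ _ Q i) // => jj x y; rewrite hE.
move=> Hh m; have [I [h [_ [[Q [oQ dg]] [k [c [v [Sv E]]]]]]]] := Hh m.
exists Q; split => //.
refine (span_ext _ _ _ (span_sum _ _ c v _) E) => j.
have [f ->] := Sv j.
pose dd := fun jj : 'I_p.*2 => \row_l (Q *m h (f jj) *m Q^T) l l.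
have QtQ : Q^T *m Q = 1%:M by apply: mulmx1C.
have HE : forall jj, h (f jj) = Q^T *m diag_mx (dd jj) *m Q.
  move=> jj.
  have -> : diag_mx (dd jj) = Q *m h (f jj) *m Q^T.
    apply/matrixP => x y; rewrite [diag_mx _ _ _]mxE.
    case: (eqVneq x y) => [->|nxy]; first by rewrite mulr1n /dd mxE.
    by rewrite mulr0n; symmetry; apply: (is_diag_mxP (dg (f jj)) x y nxy).
  by rewrite !mulmxA QtQ mul1mx -mulmxA QtQ mulmx1.
refine (span_ext _ _ _ (span_sum _ _ _ _ (fun g : {ffun 'I_p.*2 -> 'I_n} => pure_in_span R n _ Q g)) _).
move=> a b; exact: (dprod_diag _ _ _ Q _ dd).
Qed.
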